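(* Let $S$ be a numerical semigroup with minimal generating set $P$, $D=S^*+S^*$, $X$ its set of nonzero Apéry elements and $G=G(S)=(V,E)$. For every $u\in V\cap D$ such that $u\neq 2x$ for all $x\in P$, we have $|X\cap D|\le|E|-\deg(u)$.
   Context: A numerical semigroup is a subset $S\subseteq\mathbb N$ containing $0$, closed under addition, with finite complement; $S^*=S\setminus\{0\}$, $m=\min S^*$, $P=S^*\setminus D$. $X=\{s\in S^*: s-m\notin S\}$. The graph $G(S)$ has edge set $E$ consisting of all subsets $\{x,y\}\subseteq X$ ($x=y$ allowed) with $x+y\in X$, and vertex set $V$ the endvertices of these edges. $N_G(x)=\{y\in X: x+y\in X\}$ and $\deg(x)=|N_G(x)|$. *)

(* Defs.v *)
From mathcomp Require Import all_boot.
Set Implicit Arguments. Unset Strict Implicit. Unset Printing Implicit Defensive.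

Definition numerical_semigroup (S : pred nat) : Prop :=
  S 0 /\ (forall a b, S a -> S b -> S (a + b)) /\ exists N, forall n, N <= n -> S n.

Definition Sstar (S : pred nat) (x : nat) : bool := (0 < x) && S x.

(* x \in D = S^* + S^*  (a ranges over 1..x; a = x gives x - a = 0 \notin S^* ) *)
Definition inD (S : pred nat) (x : nat) : bool :=
  has (fun a => Sstar S a && Sstar S (x - a)) (iota 1 x).

(* x \in P = S^* \ D  (minimal generating set) *)
Definition inP (S : pred nat) (x : nat) : bool := Sstar S x && ~~ inD S x.

(* x \in X = { s \in S^* : s - m \notin S }, m = min S^*  (every s \in S^* has s >= m,
   so the truncated subtraction is the true one) *)
Definition inX (S : pred nat) (m x : nat) : bool := Sstar S x && ~~ S (x - m).

(* The elements of X below the bound B (B is taken large enough to contain all of X). *)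
Definition Xseq (S : pred nat) (m B : nat) : seq nat := [seq x <- iota 0 B | inX S m x].

(* |E| : unordered pairs {x, y} (x = y allowed) of elements of X with x + y \in X *)
Definition nE (S : pred nat) (m B : nat) : nat :=
  size [seq p <- [seq (x, y) | x <- Xseq S m B, y <- Xseq S m B]
          | (p.1 <= p.2) && inX S m (p.1 + p.2)].

Definition deg (S : pred nat) (m B u : nat) : nat :=
  count (fun y => inX S m (u + y)) (Xseq S m B).

Definition inV (S : pred nat) (m u : nat) : Prop :=
  exists y, [&& inX S m u, inX S m y & inX S m (u + y)].

(* Main.v *)
Require Import Defs.
From mathcomp Require Import all_boot.
From mathcomp Require Import zify.

Definition good (S : pred nat) (m u z x : nat) : bool :=
  [&& x <= z - x, inX S m x, inX S m (z - x), x != u & z - x != u].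

Definition fx (S : pred nat) (m u z : nat) : nat :=
  nth 0 [seq x <- iota 1 z | good S m u z x] 0.

Lemma fx_good S m u z : has (good S m u z) (iota 1 z) ->
  good S m u z (fx S m u z) && (fx S m u z \in iota 1 z).
Proof.
move=> h; have hs : 0 < size [seq x <- iota 1 z | good S m u z x].
  by rewrite has_filter in h; case: [seq x <- iota 1 z | good S m u z x] h.
have := mem_nth 0 hs; rewrite mem_filter /fx => /andP[-> ->]; done.
Qed.

Lemma Xsplit (S : pred nat) m z a :
  (forall a b, S a -> S b -> S (a + b)) ->
  (forall s, 0 < s -> S s -> m <= s) ->
  inX S m z -> Sstar S a -> Sstar S (z - a) -> a < z -> inX S m a.
Proof.
move=> add mn /andP[_ hz] /andP[a0 Sa] /andP[za0 Sza] az.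
rewrite /inX /Sstar a0 Sa /=; apply/negP => Sam.
have ma := mn _ a0 Sa.
have := add _ _ Sam Sza; have -> : a - m + (z - a) = z - m by lia.
by rewrite (negbTE hz).
Qed.

Lemma pick (S : pred nat) m u z a :
  (forall a b, S a -> S b -> S (a + b)) ->
  (forall s, 0 < s -> S s -> m <= s) ->
  inX S m z -> Sstar S a -> Sstar S (z - a) -> a < z -> a != u -> z - a != u ->
  has (good S m u z) (iota 1 z).
Proof.
move=> add mn Xz Sa Sza az au zau.
have Xa := @Xsplit S m z a add mn Xz Sa Sza az.
have Sza' : Sstar S (z - (z - a)) by rewrite (_ : z - (z - a) = a) //; lia.
have Xza := @Xsplit S m z (z - a) add mn Xz Sza Sza' (ltac:(move: Sa => /andP[]; lia)).
have a0 : 0 < a by case/andP: Sa.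
have za0 : 0 < z - a by case/andP: Sza.
apply/hasP; case: (leqP a (z - a)) => h.
  exists a; first by rewrite mem_iota; lia.
  by rewrite /good h Xa Xza au zau.
exists (z - a); first by rewrite mem_iota; lia.
rewrite /good (_ : z - (z - a) = a); last by lia.
apply/and5P; split => //; lia.
Qed.

Lemma udec (S : pred nat) u :
  (forall a b, S a -> S b -> S (a + b)) ->
  inD S u -> (forall x, inP S x -> u <> 2 * x) ->
  exists c, [&& Sstar S c, Sstar S (u - c), c < u & c != u - c].
Proof.
move=> add /hasP[a]; rewrite mem_iota => ha /andP[Sa Sua] hP.
have au : a < u by move: Sua => /andP[]; lia.
case: (eqVneq a (u - a)) => [e|ne]; last by exists a; rewrite Sa Sua au ne.
have : ~~ inP S a by apply/negP => /hP; lia.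
rewrite /inP Sa /= negbK => /hasP[c]; rewrite mem_iota => hc /andP[Sc Sac].
have ca : c < a by move: Sac => /andP[]; lia.
exists c; rewrite Sc /=.
have -> : u - c = (a - c) + a by lia.
apply/and3P; split; last by lia.
- move: Sac Sa => /andP[h1 h2] /andP[h3 h4]; rewrite /Sstar (add _ _ h2 h4); lia.
- lia.
Qed.

Lemma hasgood (S : pred nat) m u z :
  (forall a b, S a -> S b -> S (a + b)) ->
  (forall s, 0 < s -> S s -> m <= s) ->
  inD S u -> (forall x, inP S x -> u <> 2 * x) ->
  inX S m z -> inD S z -> has (good S m u z) (iota 1 z).
Proof.
move=> add mn Du hP Xz /hasP[a]; rewrite mem_iota => ha /andP[Sa Sza].
have az : a < z by move: Sza => /andP[]; lia.
case: (boolP (Sstar S (z - u))) => Szu.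
  have uz : u < z by move: Szu => /andP[]; lia.
  have [c /and4P[Sc Suc cu ne]] := @udec S u add Du hP.
  have Sstar_add : forall p q, Sstar S p -> Sstar S q -> Sstar S (p + q).
    move=> p q /andP[p0 Sp] /andP[q0 Sq]; rewrite /Sstar (add _ _ Sp Sq); lia.
  case: (eqVneq (z - u) c) => e.
    apply: (@pick S m u z (u - c) add mn Xz Suc); try lia.
    by rewrite (_ : z - (u - c) = c + (z - u)); [apply: Sstar_add | lia].
  apply: (@pick S m u z c add mn Xz Sc); try lia.
  by rewrite (_ : z - c = (u - c) + (z - u)); [apply: Sstar_add | lia].
apply: (@pick S m u z a add mn Xz Sa Sza az).
  by apply/eqP => e; move: Szu; rewrite -e Sza.
apply/eqP => e; move: Szu; rewrite (_ : z - u = a) ?Sa //; lia.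
Qed.

Theorem proposition4p16 (S : pred nat) (m N u : nat) :
  numerical_semigroup S ->
  (* m = min S^* *)
  0 < m -> S m -> (forall s, 0 < s -> S s -> m <= s) ->
  (* every integer >= N lies in S, so X \subseteq [0, N + m) *)
  (forall n, N <= n -> S n) ->
  inV S m u -> inD S u ->
  (forall x, inP S x -> u <> 2 * x) ->
  (* |X \cap D| <= |E| - deg(u) *)
  count (inD S) (Xseq S m (N + m)) + deg S m (N + m) u <= nE S m (N + m).
Proof.
move=> [S0 [add _]] m0 Sm mn HN [y0 /and3P[Xu _ _]] Du hP.
set X := Xseq S m (N + m).
have memX : forall x, (x \in X) = inX S m x.
  move=> x; rewrite mem_filter mem_iota /= add0n.
  case Xx: (inX S m x) => //=.
  case: (ltnP x (N + m)) => // h; move: Xx => /andP[_]; rewrite HN //; lia.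
pose f z := (fx S m u z, z - fx S m u z).
pose g y := if u <= y then (u, y) else (y, u).
have fP : forall z, z \in [seq z <- X | inD S z] ->
   [/\ (f z).1 + (f z).2 = z, (f z).1 <= (f z).2, inX S m (f z).1, inX S m (f z).2
      & ((f z).1 != u) && ((f z).2 != u)].
  move=> z; rewrite mem_filter memX => /andP[Dz Xz].
  have /andP[/and5P[h1 h2 h3 h4 h5]] := @fx_good S m u z (@hasgood S m u z add mn Du hP Xz Dz).
  rewrite mem_iota /f /= => h6; split => //; first lia.
  by rewrite h4 h5.
have gP : forall y, (g y).1 + (g y).2 = u + y.
  by move=> y; rewrite /g; case: ifP => _ /=; lia.
set s1 := [seq f z | z <- [seq z <- X | inD S z]].
set s2 := [seq g y | y <- [seq y <- X | inX S m (u + y)]].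
have -> : count (inD S) X + deg S m (N + m) u = size (s1 ++ s2).
  by rewrite size_cat !size_map !size_filter.
apply: uniq_leq_size.
  rewrite cat_uniq; apply/and3P; split.
  - rewrite map_inj_in_uniq ?filter_uniq ?iota_uniq //.
    move=> z1 z2 /fP[e1 _ _ _ _] /fP[e2 _ _ _ _] e.
    by rewrite -e1 -e2 e.
  - apply/hasPn => p /mapP[y _ ->]; apply/negP => /mapP[z /fP[e1 _ _ _ /andP[n1 n2]] e].
    move: e n1 n2; rewrite /g; case: ifP => _ <- /=; rewrite eqxx //= andbF.
  - rewrite map_inj_in_uniq ?filter_uniq ?iota_uniq //.
    move=> y1 y2 _ _ e; have := gP y1; rewrite e gP; lia.
move=> p; rewrite mem_cat => /orP[/mapP[z hz ->]|/mapP[y]].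
  have [e1 h1 h2 h3 _] := fP z hz.
  move: hz; rewrite mem_filter memX => /andP[_ Xz].
  rewrite mem_filter /= e1 h1 Xz /=.
  have -> : f z = ((f z).1, (f z).2) by case: (f z).
  by apply: allpairs_f; rewrite memX.
rewrite mem_filter memX => /andP[Xuy Xy] ->.
rewrite mem_filter gP Xuy andbT.
have -> : g y = ((g y).1, (g y).2) by case: (g y).
apply/andP; split; first by rewrite /g; case: ifP => /=; lia.
by apply: allpairs_f; rewrite memX /g; case: ifP.
Qed.
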